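(* Every theorem of the proof system $\mathbf{P}$ is valid, i.e. its interpretation equals $\Omega$ in every belief model for $G$. In particular, for positive optimality conditions $\phi_i$ and every formula $\chi$, $[\![\mathit{rat}_\phi]\!]\cap[\![\Box\chi]\!]\subseteq[\![O_\phi\chi]\!]$.
   Context: Strategic game $G=(T_1,\dots,T_n,<_1,\dots,<_n)$, $\ge_i$ reflexive closure of $<_i$ on $T=\prod_iT_i$. Optimality condition for $i$: closed first-order formula over atoms $C(a)$, $a\ge^i_cb$, constant $o$; in $(G,G',s)$ with $o\mapsto s$: $C(x)$ iff $\alpha(x)_j\in G'_j$ for all $j$, $x\ge^i_zy$ iff $(\alpha(x)_i,\alpha(z)_{-i})\ge_i(\alpha(y)_i,\alpha(z)_{-i})$; positive if all $C(\cdot)$ under an even number of negations. Belief model $(\Omega,\bar s_1,\dots,\bar s_n,P_1,\dots,P_n)$, $(G_E)_i=\{\bar s_i(u):u\in E\}$. $\mathcal{L}_\nu$: $\psi::=\mathit{rat}_{\phi_i}\mid X\mid\psi\wedge\psi\mid\neg\psi\mid\Box_i\psi\mid O_{\phi_i}\psi\mid\nu X.\psi$ ($\nu$-free body), with $[\![\mathit{rat}_{\phi_i}]\!]_E=\{\omega:(G,G_{P_i(\omega)},\bar s(\omega))\models\phi_i\}$, $[\![X]\!]_E=E$, $[\![\Box_i\psi]\!]_E=\{\omega:P_i(\omega)\subseteq[\![\psi]\!]_E\}$, $[\![O_{\phi_i}\psi]\!]_E=\{\omega:(G,G_{[\![\psi]\!]_E},\bar s(\omega))\models\phi_i\}$,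 $[\![\nu X.\psi]\!]_E$ the transfinite-iteration outcome from $\Omega$ of $F\mapsto[\![\psi]\!]_F\cap F$. $\mathit{rat}_\phi,\Box,O_\phi$ are conjunctions over all players. Positive in $X$: $X$ under even negations and inside $O_{\phi_i}$ only for positive $\phi_i$. Proof system $\mathbf{P}$: propositional tautologies and modus ponens; axiom $\mathit{rat}_\phi\to(\Box\chi\to O_\phi\chi)$; axiom $\nu X.\psi\to\psi[X\mapsto\nu X.\psi]$; rule from $\chi\to\psi[X\mapsto\chi]$ infer $\chi\to\nu X.\psi$; in all of these all optimality conditions are positive and $\psi$ is positive in $X$. A formula is valid if $[\![\cdot]\!]_E=\Omega$ for all belief models and all $E\subseteq\Omega$. *)

(* Defs.v *)
From mathcomp Require Import all_boot.
Unset Printing Implicit Defensive.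

(*   Variables range over strategy profiles.                           *)
Inductive oterm : Type :=
  | OV (k : nat)
  | OO.

Inductive ofm : Type :=
  | OC (a : oterm)
  | OGe (a c b : oterm)               (* a >=^i_c b *)
  | ONot (p : ofm)
  | OAnd (p q : ofm)
  | OOr (p q : ofm)
  | OImp (p q : ofm)
  | OAll (k : nat) (p : ofm)
  | OEx (k : nat) (p : ofm).

Definition otfv (t : oterm) (k : nat) : Prop :=
  match t with OV m => m = k | OO => False end.

Fixpoint ofv (p : ofm) (k : nat) : Prop :=
  match p with
  | OC a => otfv a k
  | OGe a c b => otfv a k \/ otfv c k \/ otfv b k
  | ONot p => ofv p k
  | OAnd p q | OOr p q | OImp p q => ofv p k \/ ofv q k
  | OAll m p | OEx m p => m <> k /\ ofv p k
  end.

Definition oclosed (p : ofm) : Prop := forall k, ~ ofv p k.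

(* polarity of C-atoms: b = true means "under an even number of negations";
   the antecedent of an implication counts as a negation (A -> B = ~A \/ B). *)
Fixpoint opol (b : bool) (p : ofm) : Prop :=
  match p with
  | OC _ => b = true
  | OGe _ _ _ => True
  | ONot p => opol (~~ b) p
  | OAnd p q | OOr p q => opol b p /\ opol b q
  | OImp p q => opol (~~ b) p /\ opol b q
  | OAll _ p | OEx _ p => opol b p
  end.

Definition opositive (p : ofm) : Prop := opol true p.

Section Game.
Context {n : nat} {T : 'I_n -> Type}.
Definition prof := forall i : 'I_n, T i.
Variable lt : forall i : 'I_n, prof -> prof -> Prop.

Definition ge (i : 'I_n) (x y : prof) : Prop := lt i y x \/ x = y.

Definition dev (z : prof) (i : 'I_n) (a : T i) : prof :=
  fun j => match @eqP _ i j with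
           | ReflectT e => eq_rect i T a j e
           | ReflectF _ => z j
           end.

Definition geAt (i : 'I_n) (x z y : prof) : Prop :=
  ge i (dev z i (x i)) (dev z i (y i)).

Definition upd (env : nat -> prof) (k : nat) (x : prof) : nat -> prof :=
  fun m => if m == k then x else env m.

Definition oteval (s : prof) (env : nat -> prof) (t : oterm) : prof :=
  match t with OV k => env k | OO => s end.

(* satisfaction in (G, G', s) for player i; G' j is the restricted strategy set *)
Fixpoint osat (Gr : forall j : 'I_n, T j -> Prop) (i : 'I_n) (s : prof)
         (env : nat -> prof) (p : ofm) : Prop :=
  match p with
  | OC a => forall j, Gr j (oteval s env a j)
  | OGe a c b => geAt i (oteval s env a) (oteval s env c) (oteval s env b)
  | ONot p => ~ osat Gr i s env p
  | OAnd p q => osat Gr i s env p /\ osat Gr i s env q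
  | OOr p q => osat Gr i s env p \/ osat Gr i s env q
  | OImp p q => osat Gr i s env p -> osat Gr i s env q
  | OAll k p => forall x : prof, osat Gr i s (upd env k x) p
  | OEx k p => exists x : prof, osat Gr i s (upd env k x) p
  end.

(* (G, G', s) |= phi   (phi closed; the environment is irrelevant) *)
Definition omodels (Gr : forall j : 'I_n, T j -> Prop) (i : 'I_n) (s : prof)
           (p : ofm) : Prop := osat Gr i s (fun _ => s) p.

Record bmodel : Type := BModel {
  Om : Type;
  sbar : forall i : 'I_n, Om -> T i;
  Pb : 'I_n -> Om -> Om -> Prop
}.

Definition sprof {M : bmodel} (w : Om M) : prof := fun i => sbar M i w.

Definition GE {M : bmodel} (E : Om M -> Prop) : forall j : 'I_n, T j -> Prop :=
  fun j t => exists u, E u /\ sbar M j u = t.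

End Game.

Inductive form (n : nat) : Type :=
  | Rat (i : 'I_n) (p : ofm)
  | Var
  | And (a b : form n)
  | Not (a : form n)
  | Box (i : 'I_n) (a : form n)
  | Opt (i : 'I_n) (p : ofm) (a : form n)
  | Nu (a : form n).
Arguments Rat {n}. Arguments Var {n}. Arguments And {n}. Arguments Not {n}.
Arguments Box {n}. Arguments Opt {n}. Arguments Nu {n}.

Definition Imp {n} (a b : form n) : form n := Not (And a (Not b)).

(* nu X. X denotes Omega; used as the empty conjunction *)
Definition Top (n : nat) : form n := Nu Var.

Fixpoint bigAnd {n} (l : seq (form n)) : form n :=
  match l with
  | [::] => Top n
  | [:: a] => a
  | a :: l => And a (bigAnd l)
  end.

Definition RatAll {n} (phi : 'I_n -> ofm) : form n :=
  bigAnd [seq Rat i (phi i) | i <- enum 'I_n].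
Definition BoxAll {n} (chi : form n) : form n :=
  bigAnd [seq Box i chi | i <- enum 'I_n].
Definition OptAll {n} (phi : 'I_n -> ofm) (chi : form n) : form n :=
  bigAnd [seq Opt i (phi i) chi | i <- enum 'I_n].

Fixpoint nufree {n} (a : form n) : Prop :=
  match a with
  | Rat _ _ | Var => True
  | And a b => nufree a /\ nufree b
  | Not a | Box _ a | Opt _ _ a => nufree a
  | Nu _ => False
  end.

Fixpoint wf {n} (a : form n) : Prop :=
  match a with
  | Rat _ p => oclosed p
  | Var => True
  | And a b => wf a /\ wf b
  | Not a | Box _ a => wf a
  | Opt _ p a => oclosed p /\ wf a
  | Nu a => nufree a /\ wf a
  end.

Fixpoint allpos {n} (a : form n) : Prop :=
  match a with
  | Rat _ p => opositive p
  | Var => True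
  | And a b => allpos a /\ allpos b
  | Not a | Box _ a | Nu a => allpos a
  | Opt _ p a => opositive p /\ allpos a
  end.

Fixpoint freeX {n} (a : form n) : Prop :=
  match a with
  | Rat _ _ => False
  | Var => True
  | And a b => freeX a \/ freeX b
  | Not a | Box _ a | Opt _ _ a => freeX a
  | Nu _ => False
  end.

Fixpoint polX {n} (b : bool) (a : form n) : Prop :=
  match a with
  | Rat _ _ => True
  | Var => b = true
  | And a c => polX b a /\ polX b c
  | Not a => polX (~~ b) a
  | Box _ a => polX b a
  | Opt _ p a => (freeX a -> opositive p) /\ polX b a
  | Nu _ => True
  end.

Definition posX {n} (a : form n) : Prop := polX true a.

(* a[X |-> c] (X is bound under nu) *)
Fixpoint subst {n} (c : form n) (a : form n) : form n :=
  match a with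
  | Rat i p => Rat i p
  | Var => c
  | And a b => And (subst c a) (subst c b)
  | Not a => Not (subst c a)
  | Box i a => Box i (subst c a)
  | Opt i p a => Opt i p (subst c a)
  | Nu a => Nu a
  end.

(* The transfinite iteration of op from Omega: the least family of sets
   containing Omega, closed under op and under arbitrary intersections;
   its outcome is the intersection of this family (the final stage). *)
Inductive iter {O : Type} (op : (O -> Prop) -> (O -> Prop)) : (O -> Prop) -> Prop :=
  | it_top : iter op (fun _ => True)
  | it_step (X : O -> Prop) : iter op X -> iter op (op X)
  | it_meet (S : (O -> Prop) -> Prop) :
      (forall X, S X -> iter op X) -> iter op (fun w => forall X, S X -> X w).

Definition outcome {O : Type} (op : (O -> Prop) -> (O -> Prop)) : O -> Prop :=
  fun w => forall X, iter op X -> X w.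

Section Sem.
Context {n : nat} {T : 'I_n -> Type}.
Variable lt : forall i : 'I_n, @prof n T -> @prof n T -> Prop.
Context {M : @bmodel n T}.

Fixpoint sem (a : form n) (E : Om M -> Prop) : Om M -> Prop :=
  match a with
  | Rat i p => fun w => omodels lt (GE (Pb M i w)) i (sprof w) p
  | Var => E
  | And a b => fun w => sem a E w /\ sem b E w
  | Not a => fun w => ~ sem a E w
  | Box i a => fun w => forall u, Pb M i w u -> sem a E u
  | Opt i p a => fun w => omodels lt (GE (sem a E)) i (sprof w) p
  | Nu a => outcome (fun F w => sem a F w /\ F w)
  end.
End Sem.

Definition valid {n} {T : 'I_n -> Type} (lt : forall i : 'I_n, @prof n T -> @prof n T -> Prop)
           (a : form n) : Prop :=
  forall (M : @bmodel n T) (E : Om M -> Prop) (w : Om M), sem lt a E w.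

Inductive pform : Type :=
  | PV (k : nat)
  | PNot (p : pform)
  | PAnd (p q : pform).

Fixpoint peval (v : nat -> bool) (p : pform) : bool :=
  match p with
  | PV k => v k
  | PNot p => ~~ peval v p
  | PAnd p q => peval v p && peval v q
  end.

Definition tautology (p : pform) : Prop := forall v, peval v p = true.

Fixpoint psub {n} (sg : nat -> form n) (p : pform) : form n :=
  match p with
  | PV k => sg k
  | PNot p => Not (psub sg p)
  | PAnd p q => And (psub sg p) (psub sg q)
  end.

Inductive Prov {n : nat} : form n -> Prop :=
  | P_taut (p : pform) (sg : nat -> form n) :
      tautology p -> wf (psub sg p) -> Prov (psub sg p)
  | P_mp (a b : form n) : Prov a -> Prov (Imp a b) -> Prov b
  | P_rat (phi : 'I_n -> ofm) (chi : form n) :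
      (forall i, oclosed (phi i)) -> (forall i, opositive (phi i)) ->
      wf chi -> allpos chi ->
      Prov (Imp (RatAll phi) (Imp (BoxAll chi) (OptAll phi chi)))
  | P_nu (psi : form n) :
      wf (Nu psi) -> allpos psi -> posX psi ->
      Prov (Imp (Nu psi) (subst (Nu psi) psi))
  | P_nurule (chi psi : form n) :
      wf chi -> wf (Nu psi) -> allpos chi -> allpos psi -> posX psi ->
      Prov (Imp chi (subst chi psi)) -> Prov (Imp chi (Nu psi)).

(* Main.v *)
Require Import Defs.
From mathcomp Require Import all_boot.
From Stdlib Require Import Classical ClassicalEpsilon FunctionalExtensionality PropExtensionality.

Section S.
Variable n : nat.
Variable T : 'I_n -> Type.
Variable lt : forall i : 'I_n, @prof n T -> @prof n T -> Prop.

Lemma osat_mono (Gr Gr' : forall j : 'I_n, T j -> Prop) i p :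
  (forall j t, Gr j t -> Gr' j t) ->
  forall b s env, opol b p ->
  if b then (osat lt Gr i s env p -> osat lt Gr' i s env p)
  else (osat lt Gr' i s env p -> osat lt Gr i s env p).
Proof.
  intros HG; induction p as [a|a c bb|p IHp|p1 IHp1 p2 IHp2|p1 IHp1 p2 IHp2|p1 IHp1 p2 IHp2|k p IHp|k p IHp]; intros b s env Hp; simpl in Hp.
  - subst b; simpl; intros H j; apply HG; apply H.
  - destruct b; simpl; auto.
  - specialize (IHp (~~ b) s env Hp); destruct b; simpl in *; tauto.
  - destruct Hp as [H1 H2]; specialize (IHp1 b s env H1); specialize (IHp2 b s env H2);
    destruct b; simpl in *; tauto.
  - destruct Hp as [H1 H2]; specialize (IHp1 b s env H1); specialize (IHp2 b s env H2);
    destruct b; simpl in *; tauto.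
  - destruct Hp as [H1 H2]; specialize (IHp1 (~~ b) s env H1); specialize (IHp2 b s env H2);
    destruct b; simpl in *; tauto.
  - destruct b; simpl; intros H x; specialize (IHp _ s (upd env k x) Hp); simpl in IHp; auto.
  - destruct b; simpl; intros [x H]; exists x; specialize (IHp _ s (upd env k x) Hp); simpl in IHp; auto.
Qed.

Lemma omodels_mono (Gr Gr' : forall j : 'I_n, T j -> Prop) i s p :
  (forall j t, Gr j t -> Gr' j t) -> opositive p ->
  omodels lt Gr i s p -> omodels lt Gr' i s p.
Proof.
  intros HG Hp; exact (osat_mono Gr Gr' i p HG true s (fun _ => s) Hp).
Qed.

Context {M : @bmodel n T}.

Lemma sem_subst (c a : form n) (E : Om M -> Prop) :
  sem lt (subst c a) E = sem lt a (sem lt c E).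
Proof.
  induction a; simpl; try reflexivity.
  - rewrite IHa1 IHa2; reflexivity.
  - rewrite IHa; reflexivity.
  - rewrite IHa; reflexivity.
  - rewrite IHa; reflexivity.
Qed.

Lemma sem_indep (a : form n) (F F' : Om M -> Prop) :
  ~ freeX a -> sem lt a F = sem lt a F'.
Proof.
  induction a; simpl; intros H; try reflexivity.
  - tauto.
  - rewrite IHa1 ?IHa2; tauto.
  - rewrite IHa; tauto.
  - rewrite IHa; tauto.
  - rewrite IHa; tauto.
Qed.

Lemma sem_mono (a : form n) : forall b, polX b a -> forall (F F' : Om M -> Prop),
  (forall w, F w -> F' w) ->
  if b then (forall w, sem lt a F w -> sem lt a F' w)
  else (forall w, sem lt a F' w -> sem lt a F w).
Proof.
  induction a; intros b Hp F F' HF; simpl in Hp.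
  - destruct b; simpl; auto.
  - subst b; simpl; auto.
  - destruct Hp as [H1 H2]; specialize (IHa1 b H1 F F' HF); specialize (IHa2 b H2 F F' HF);
    destruct b; simpl in *; intros w [? ?]; auto.
  - specialize (IHa (~~ b) Hp F F' HF); destruct b; simpl in *; intros w H1 H2; auto.
  - specialize (IHa b Hp F F' HF); destruct b; simpl in *; intros w H1 u Hu; auto.
  - destruct Hp as [Hf Hp]; specialize (IHa b Hp F F' HF).
    destruct (classic (freeX a)) as [Hx|Hx].
    + specialize (Hf Hx).
      destruct b; simpl in *; intros w; apply omodels_mono; auto;
      intros j t [u [Hu Ht]]; exists u; auto.
    + destruct b; simpl; rewrite (sem_indep a F F' Hx); auto.
  - destruct b; simpl; auto.
Qed.

Lemma top_sem (E : Om M -> Prop) w : sem lt (Top n) E w.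
Proof.
  simpl. unfold outcome. intros X HX. induction HX; simpl; auto.
Qed.

Lemma bigAnd_sem {I : eqType} (f : I -> form n) (s : seq I) (E : Om M -> Prop) w :
  sem lt (bigAnd [seq f i | i <- s]) E w <-> (forall i, i \in s -> sem lt (f i) E w).
Proof.
  elim: s => [|x s IH].
  - simpl. split; [intros _ i Hi; discriminate | intros _; exact (top_sem E w)].
  - destruct s as [|y s'].
    + simpl. split.
      * intros H i Hi. rewrite inE in Hi. move/eqP: Hi => ->. exact H.
      * intros H. apply H. by rewrite inE.
    + change (sem lt (And (f x) (bigAnd [seq f i | i <- y :: s'])) E w <->
        (forall i, i \in x :: y :: s' -> sem lt (f i) E w)).
      simpl. rewrite IH. split.
      * intros [H1 H2] i Hi. rewrite in_cons in Hi. case/orP: Hi => [/eqP -> //|Hi]. auto.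
      * intros H. split. apply H. by rewrite inE eqxx. intros i Hi; apply H; by rewrite in_cons Hi orbT.
Qed.

Lemma allI_sem (f : 'I_n -> form n) (E : Om M -> Prop) w :
  sem lt (bigAnd [seq f i | i <- enum 'I_n]) E w <-> (forall i, sem lt (f i) E w).
Proof.
  rewrite bigAnd_sem. split. intros H i; apply H; by rewrite mem_enum. intros H i _; apply H.
Qed.

Lemma rat_sound (phi : 'I_n -> ofm) (chi : form n) (E : Om M -> Prop) :
  (forall i, opositive (phi i)) -> forall w,
  sem lt (RatAll phi) E w -> sem lt (BoxAll chi) E w -> sem lt (OptAll phi chi) E w.
Proof.
  intros Hp w HR HB. unfold RatAll, BoxAll, OptAll in *.
  rewrite allI_sem in HR. rewrite allI_sem in HB. apply allI_sem.
  intros i. specialize (HR i). specialize (HB i). simpl in *.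
  eapply omodels_mono; [|apply Hp|exact HR].
  intros j t [u [Hu Ht]]. exists u; auto.
Qed.

Lemma psub_sem (sg : nat -> form n) (E : Om M -> Prop) w (v : nat -> bool) :
  (forall k, v k = true <-> sem lt (sg k) E w) ->
  forall p, peval v p = true <-> sem lt (psub sg p) E w.
Proof.
  intros Hv; induction p; simpl.
  - auto.
  - rewrite -IHp; destruct (peval v p); simpl; split; intros H; try discriminate; try reflexivity; try (exfalso; apply H; reflexivity); try (intros H'; discriminate).
  - rewrite -IHp1 -IHp2; destruct (peval v p1), (peval v p2); simpl; split; intros H; try discriminate; try (destruct H; discriminate); auto.
Qed.
End S.

Theorem mainTheorem10 (n : nat) (T : 'I_n -> Type)
    (lt : forall i : 'I_n, @prof n T -> @prof n T -> Prop) :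
  (forall a : form n, Prov a -> valid lt a) /\
  (forall (M : @bmodel n T) (phi : 'I_n -> ofm) (chi : form n) (E : Om M -> Prop),
      (forall i, oclosed (phi i)) -> (forall i, opositive (phi i)) -> wf chi ->
      forall w : Om M,
        sem lt (RatAll phi) E w -> sem lt (BoxAll chi) E w ->
        sem lt (OptAll phi chi) E w).
Proof.
  split.
  - intros a HP. induction HP; intros Mo E w.
    + set (v := fun k => if excluded_middle_informative (sem lt (sg k) E w) then true else false).
      apply (@psub_sem n T lt Mo sg E w v).
      * intros k. unfold v. destruct (excluded_middle_informative _); split; auto; discriminate.
      * apply H.
    + specialize (IHHP1 Mo E w). specialize (IHHP2 Mo E w).
      unfold Imp in IHHP2; simpl in IHHP2. apply NNPP. tauto.
    + unfold Imp; simpl. intros [HR HB]. apply HB. intros [HB' HO].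
      apply HO. apply rat_sound; auto.
    + unfold Imp; simpl. rewrite sem_subst. intros [HN HS]. apply HS.
      set (op := fun (F : Om Mo -> Prop) w => sem lt psi F w /\ F w).
      assert (Hit : Defs.iter op (outcome op)).
      { unfold outcome; apply it_meet; intros X HX; exact HX. }
      apply it_step in Hit. exact (proj1 (HN _ Hit)).
    + unfold Imp; simpl. intros [HC HN]. apply HN.
      set (op := fun (F : Om Mo -> Prop) w => sem lt psi F w /\ F w).
      assert (Hc : forall X, Defs.iter op X -> forall u, sem lt chi E u -> X u).
      { intros X HX. induction HX; intros u Hu.
        - exact I.
        - split; [|auto].
          pose proof (IHHP Mo E u) as Hv. unfold Imp in Hv; simpl in Hv.
          rewrite sem_subst in Hv.
          assert (Hs : sem lt psi (sem lt chi E) u) by (apply NNPP; tauto).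
          exact (@sem_mono n T lt Mo psi true H3 _ _ IHHX u Hs).
        - intros Z HZ; exact (H5 Z HZ u Hu). }
      intros X HX. exact (Hc X HX w HC).
  - intros Mo phi chi E _ Hp _ w; apply rat_sound; auto.
Qed.
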